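(* Let $C$ be a real $k\times l$ matrix with all entries nonnegative and no column consisting entirely of zeros, and let $A$ be the real symmetric $(k+1+l)\times(k+1+l)$ block matrix $$A=\begin{pmatrix}\mathbf 0_{k\times k}&\mathbf 0_{k\times 1}&C\\ \mathbf 0_{1\times k}&0&\mathbf 0_{1\times l}\\ C^{T}&\mathbf 0_{l\times 1}&\mathbf 0_{l\times l}\end{pmatrix}.$$ If $A$ has symmetric tropical rank two, then $A$ has symmetric Kapranov rank two.
   Context: Let $\tilde K$ be the field of Hahn series $\sum_{\alpha\in A}c_\alpha t^\alpha$ ($A\subset\mathbb R$ well-ordered, $c_\alpha\in\mathbb C$); for nonzero $a\in\tilde K$, $\deg(a)$ is the smallest exponent with nonzero coefficient. A symmetric lift of a real symmetric matrix $A$ is a symmetric matrix $\tilde A$ over $\tilde K$ with all entries nonzero and $\deg(\tilde a_{i,j})=A_{i,j}$; the symmetric Kapranov rank of $A$ is the minimum rank of a symmetric lift. For an $r\times r$ submatrix of $A$ with row index set $I$ and column index set $J$, each bijection $\rho:I\to J$ gives a monomial $\prod_{i\in I}X_{i,\rho(i)}$ in commuting variables subject to $X_{i,j}=X_{j,i}$, with value $\sum_{i\in I}A_{i,\rho(i)}$; the submatrix is symmetrically tropically singular if the minimum value is attained by at least two distinct monomials. The symmetric tropical rank of $A$ is the largest $r$ such that $A$ has an $r\times r$ submatrix that is not symmetrically tropically singular. *)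

(* Defs.v *)
From HB Require Import structures.
From mathcomp Require Import all_boot all_order all_algebra.
From mathcomp Require Import boolp classical_sets fsbigop.
From mathcomp Require Import complex Rstruct.
Set Implicit Arguments. Unset Strict Implicit. Unset Printing Implicit Defensive.
Import Order.TTheory GRing.Theory Num.Theory.
Local Open Scope ring_scope.
Local Open Scope classical_set_scope.

Definition RR := Rdefinitions.R.
Definition CC := (Rdefinitions.R)[i].

(* raw coefficient functions; a Hahn series is such a function whose support
   is well-ordered *)
Definition hs := RR -> CC.

Definition hsupport (f : hs) : set RR := [set a | f a != 0].

Definition well_ordered (A : set RR) : Prop :=
  forall B : set RR, B `<=` A -> B !=set0 ->
    exists b, B b /\ forall x, B x -> b <= x.

Definition is_hahn (f : hs) : Prop := well_ordered (hsupport f).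

Definition hzero : hs := fun _ => 0.
Definition hadd (f g : hs) : hs := fun x => f x + g x.
(* Cauchy product: (fg)_c = sum_{a+b=c} f_a g_b; for Hahn series the index
   set below is finite, so the finitely supported sum is the honest sum *)
Definition hmul (f g : hs) : hs := fun c =>
  (\sum_(p \in [set p : RR * RR | (p.1 + p.2 = c) /\ f p.1 != 0 /\ g p.2 != 0])
      (f p.1 * g p.2))%R.

Definition hdeg_is (f : hs) (a : RR) : Prop :=
  f a != 0 /\ forall b, b < a -> f b = 0.

(* rank over the Hahn series field: L (an m x n matrix of Hahn series) has
   rank <= r iff it factors as U V through r columns of Hahn series *)
Definition hs_factors m n (L : 'M[hs]_(m, n)) (r : nat) : Prop :=
  exists (U : 'M[hs]_(m, r)) (V : 'M[hs]_(r, n)),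
    (forall i t, is_hahn (U i t)) /\ (forall t j, is_hahn (V t j)) /\
    forall i j, L i j = \big[hadd/hzero]_(t < r) hmul (U i t) (V t j).

Definition sym_lift n (A : 'M[RR]_n) (L : 'M[hs]_n) : Prop :=
  (forall i j, L i j = L j i) /\
  (forall i j, is_hahn (L i j) /\ hdeg_is (L i j) (A i j)).

Definition sym_kapranov_rank_is n (A : 'M[RR]_n) (r : nat) : Prop :=
  (exists L, sym_lift A L /\ hs_factors L r) /\
  (forall L s, sym_lift A L -> hs_factors L s -> (r <= s)%N).

Definition is_bij n (I J : {set 'I_n}) (rho : 'I_n -> 'I_n) : Prop :=
  {in I &, injective rho} /\ rho @: I = J.

(* the monomial prod_{i in I} X_{i, rho i} with X_{a,b} = X_{b,a}, encoded by
   its exponent of each variable X_{a,b} = X_{b,a} *)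
Definition sym_monomial n (I : {set 'I_n}) (rho : 'I_n -> 'I_n) :
    'I_n -> 'I_n -> nat :=
  fun a b => #|[set i in I | ((i == a) && (rho i == b)) ||
                             ((i == b) && (rho i == a))]|.

Definition trop_value n (A : 'M[RR]_n) (I : {set 'I_n}) (rho : 'I_n -> 'I_n)
  : RR := \sum_(i in I) A i (rho i).

Definition sym_trop_singular n (A : 'M[RR]_n) (I J : {set 'I_n}) : Prop :=
  exists rho1 rho2,
    [/\ is_bij I J rho1, is_bij I J rho2,
        sym_monomial I rho1 <> sym_monomial I rho2,
        trop_value A I rho1 = trop_value A I rho2 &
        forall sigma, is_bij I J sigma ->
          trop_value A I rho1 <= trop_value A I sigma].

Definition sym_trop_rank_is n (A : 'M[RR]_n) (r : nat) : Prop :=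
  (exists I J : {set 'I_n},
      [/\ #|I| = r, #|J| = r & ~ sym_trop_singular A I J]) /\
  (forall (s : nat) (I J : {set 'I_n}),
      #|I| = s -> #|J| = s -> ~ sym_trop_singular A I J -> (s <= r)%N).

Definition blockA k l (C : 'M[RR]_(k, l)) : 'M[RR]_(k + 1 + l) :=
  block_mx (0 : 'M[RR]_(k + 1)) (col_mx C (0 : 'M[RR]_(1, l)))
           (row_mx C^T (0 : 'M[RR]_(l, 1))) (0 : 'M[RR]_l).

(* Main.v *)
Require Import Defs.
From HB Require Import structures.
From mathcomp Require Import all_boot all_order all_algebra.
From mathcomp Require Import boolp classical_sets fsbigop complex Rstruct.
From mathcomp Require Import lra zify.
Set Implicit Arguments. Unset Strict Implicit. Unset Printing Implicit Defensive.
Import Order.TTheory GRing.Theory Num.Theory.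
Local Open Scope ring_scope.

Lemma hdeg_uniq f a b : hdeg_is f a -> hdeg_is f b -> a = b.
Proof.
move=> [Ha Hla] [Hb Hlb]; case: (ltgtP a b) => // H.
- by move: Ha; rewrite Hlb // eqxx.
- by move: Hb; rewrite Hla // eqxx.
Qed.

Lemma hmul_deg f g a b : hdeg_is f a -> hdeg_is g b -> hdeg_is (hmul f g) (a + b).
Proof.
move=> [Ha Hla] [Hb Hlb].
have lo1 x : f x != 0 -> a <= x.
  by move=> Hx; rewrite leNgt; apply/negP => /Hla; apply/eqP.
have lo2 x : g x != 0 -> b <= x.
  by move=> Hx; rewrite leNgt; apply/negP => /Hlb; apply/eqP.
split.
- rewrite /hmul.
  have -> : [set p : RR * RR | (p.1 + p.2 = a + b) /\ f p.1 != 0 /\ g p.2 != 0]%classic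
      = [set (a, b)]%classic.
    apply/seteqP; split => [[p1 p2] /= [H [Hf Hg]] | p /= ->] /=.
    + have := lo1 _ Hf; have := lo2 _ Hg => h1 h2.
      rewrite /set1 /=; congr pair; lra.
    + by split => //; split.
  by rewrite fsbig_set1 mulf_neq0.
- move=> c Hc; rewrite /hmul.
  have -> : [set p : RR * RR | (p.1 + p.2 = c) /\ f p.1 != 0 /\ g p.2 != 0]%classic
      = set0.
    apply/seteqP; split => [[p1 p2] /= [H [Hf Hg]] | p //].
    have := lo1 _ Hf; have := lo2 _ Hg => h1 h2. exfalso; lra.
  by rewrite fsbig_set0.
Qed.

Lemma hmul0l f g : (forall x, f x = 0) -> forall c, hmul f g c = 0.
Proof.
move=> H c; rewrite /hmul.
have -> : [set p : RR * RR | (p.1 + p.2 = c) /\ f p.1 != 0 /\ g p.2 != 0]%classic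
      = set0.
  by apply/seteqP; split => [[p1 p2] /= [_ [Hf _]] | p //]; move: Hf; rewrite H eqxx.
by rewrite fsbig_set0.
Qed.

Definition hone : hs := fun x => if x == 0 then 1 else 0.

Lemma hmul1r f : hmul f hone = f.
Proof.
apply: funext => c; rewrite /hmul.
have [Hc|Hc] := eqVneq (f c) 0.
- have -> : [set p : RR * RR | (p.1 + p.2 = c) /\ f p.1 != 0 /\ hone p.2 != 0]%classic
      = set0.
    apply/seteqP; split => [[p1 p2] /= [H [Hf Hg]] | p //].
    move: Hg; rewrite /hone; have [E _|E] := eqVneq p2 0; last by rewrite eqxx.
    move: Hf; have -> : p1 = c by rewrite -H E addr0.
    by rewrite Hc eqxx.
  by rewrite fsbig_set0.
- have -> : [set p : RR * RR | (p.1 + p.2 = c) /\ f p.1 != 0 /\ hone p.2 != 0]%classic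
      = [set (c, 0)]%classic.
    apply/seteqP; split => [[p1 p2] /= [H [Hf Hg]] | p /= ->] /=.
    + move: Hg; rewrite /hone; have [E _|E] := eqVneq p2 0; last by rewrite eqxx.
      by rewrite /set1 /= E -H E addr0.
    + by rewrite addr0 /hone eqxx oner_eq0; split.
  by rewrite fsbig_set1 /hone eqxx mulr1.
Qed.

Lemma hmul1l f : hmul hone f = f.
Proof.
apply: funext => c; rewrite /hmul.
have [Hc|Hc] := eqVneq (f c) 0.
- have -> : [set p : RR * RR | (p.1 + p.2 = c) /\ hone p.1 != 0 /\ f p.2 != 0]%classic
      = set0.
    apply/seteqP; split => [[p1 p2] /= [H [Hg Hf]] | p //].
    move: Hg; rewrite /hone; have [E _|E] := eqVneq p1 0; last by rewrite eqxx.
    move: Hf; have -> : p2 = c by rewrite -H E add0r.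
    by rewrite Hc eqxx.
  by rewrite fsbig_set0.
- have -> : [set p : RR * RR | (p.1 + p.2 = c) /\ hone p.1 != 0 /\ f p.2 != 0]%classic
      = [set (0, c)]%classic.
    apply/seteqP; split => [[p1 p2] /= [H [Hg Hf]] | p /= ->] /=.
    + move: Hg; rewrite /hone; have [E _|E] := eqVneq p1 0; last by rewrite eqxx.
      by rewrite /set1 /= E -H E add0r.
    + by rewrite add0r /hone eqxx oner_eq0; split.
  by rewrite fsbig_set1 /hone eqxx mul1r.
Qed.

Lemma hahn_fin (s : seq RR) (f : hs) : (forall x, f x != 0 -> x \in s) -> is_hahn f.
Proof.
move=> Hs B HB; have {Hs HB} : forall x, B x -> x \in s by move=> x /HB /Hs.
elim: s B => [|a s IH] B HB [b Bb]; first by have := HB _ Bb.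
have [[b' Bb']|N] := pselect (exists b', B b' /\ b' != a).
- have HB' : forall x, (B x /\ x != a) -> x \in s.
    by move=> x [Bx xa]; move: (HB _ Bx); rewrite in_cons (negbTE xa).
  have [m [[Bm Hma] Hm]] := IH [set x | B x /\ x != a]%classic HB' (ex_intro _ b' Bb').
  have [Ba|Ba] := pselect (B a).
  + case: (leP a m) => Ham.
    * exists a; split => // x Bx; have [->|xa] := eqVneq x a; first exact: lexx.
      exact: le_trans Ham (Hm _ (conj Bx xa)).
    * exists m; split => // x Bx; have [->|xa] := eqVneq x a; first exact: ltW.
      exact: Hm.
  + exists m; split => // x Bx; have [xa|xa] := eqVneq x a; first by move: Bx; rewrite xa.
    exact: Hm.
- have Ba : B a.
    have [<-//|ba] := eqVneq b a; by exfalso; apply: N; exists b.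
  exists a; split => // x Bx; have [->//|xa] := eqVneq x a; exfalso; apply: N; by exists x.
Qed.
Section Idx.
Variables (k l : nat) (C : 'M[RR]_(k, l)).
Definition rowi (r : 'I_k) : 'I_(k + 1 + l) := lshift l (lshift 1 r).
Definition midi : 'I_(k + 1 + l) := lshift l (rshift k (ord0 : 'I_1)).
Definition coli (c : 'I_l) : 'I_(k + 1 + l) := rshift (k + 1) c.

Lemma val_rowi r : val (rowi r) = val r. Proof. by []. Qed.
Lemma val_midi : val midi = k. Proof. by rewrite /= addn0. Qed.
Lemma val_coli c : val (coli c) = (k + 1 + c)%N. Proof. by []. Qed.

Lemma idx_cases (i : 'I_(k + 1 + l)) :
  [\/ exists r, i = rowi r, i = midi | exists c, i = coli c].
Proof.
case: (split_ordP i) => j ->.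
- case: (split_ordP j) => u ->.
  + by apply: Or31; exists u.
  + apply: Or32; rewrite /midi; congr lshift; congr rshift.
    by apply: val_inj; case: u => [[|m] Hm].
- by apply: Or33; exists j.
Qed.

Lemma A_rc r c : blockA C (rowi r) (coli c) = C r c.
Proof. by rewrite /blockA block_mxEur col_mxEu. Qed.
Lemma A_cr r c : blockA C (coli c) (rowi r) = C r c.
Proof. by rewrite /blockA block_mxEdl row_mxEl mxE. Qed.
Lemma A_rr r r' : blockA C (rowi r) (rowi r') = 0.
Proof. by rewrite /blockA block_mxEul mxE. Qed.
Lemma A_rm r : blockA C (rowi r) midi = 0.
Proof. by rewrite /blockA block_mxEul mxE. Qed.
Lemma A_mr r : blockA C midi (rowi r) = 0.
Proof. by rewrite /blockA block_mxEul mxE. Qed.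
Lemma A_mm : blockA C midi midi = 0.
Proof. by rewrite /blockA block_mxEul mxE. Qed.
Lemma A_mc c : blockA C midi (coli c) = 0.
Proof. by rewrite /blockA block_mxEur col_mxEd mxE. Qed.
Lemma A_cm c : blockA C (coli c) midi = 0.
Proof. by rewrite /blockA block_mxEdl row_mxEr mxE. Qed.
Lemma A_cc c c' : blockA C (coli c) (coli c') = 0.
Proof. by rewrite /blockA block_mxEdr mxE. Qed.

Lemma rowi_inj : injective rowi.
Proof. by move=> a b /(congr1 val) /= /val_inj. Qed.
Lemma coli_inj : injective coli.
Proof. by move=> a b /(congr1 val); rewrite !val_coli => /addnI /val_inj. Qed.
Lemma rowi_midi r : rowi r != midi.
Proof. by apply/negP => /eqP/(congr1 val); rewrite val_midi /= => E; move: (ltn_ord r); rewrite E ltnn. Qed.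
Lemma rowi_coli r c : rowi r != coli c.
Proof. apply/negP => /eqP/(congr1 val); rewrite val_coli /= => E; move: (ltn_ord r); rewrite E. lia. Qed.
Lemma midi_coli c : midi != coli c.
Proof. apply/negP => /eqP/(congr1 val); rewrite val_coli val_midi. lia. Qed.
End Idx.
Section Enc.
Variables (k l : nat) (C : 'M[RR]_(k, l)).
Hypothesis H2 : forall (x : RR) r r' c c',
  x < C r c' -> x < C r c -> x < C r' c' -> x < C r' c.

Definition pP (P : pred 'I_k) : pred nat := fun n => [exists i : 'I_k, (val i == n) && P i].
Definition minS (P : pred 'I_k) : nat := find (pP P) (iota 0 k).

Lemma minS_le (P : pred (ordinal k)) (i : 'I_k) : P i -> (minS P <= i)%N.
Proof.
move=> Pi; rewrite leqNgt; apply/negP => /(before_find 0%N).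
rewrite nth_iota // add0n => /negbT/negP H; apply: H; apply/existsP; exists i; by rewrite eqxx Pi.
Qed.

Lemma minS_lek (P : pred (ordinal k)) : (minS P <= k)%N.
Proof. by rewrite /minS -[X in (_ <= X)%N](size_iota 0 k) find_size. Qed.

Lemma minS_mem (P : pred (ordinal k)) : (minS P < k)%N -> exists i : 'I_k, val i = minS P /\ P i.
Proof.
move=> H; have := H; rewrite -[X in (_ < X)%N](size_iota 0 k) -has_find => Hh.
have := nth_find 0%N Hh; rewrite -/(minS P) nth_iota // add0n => /existsP [i /andP [/eqP E Pi]].
by exists i.
Qed.

Definition encR (r : 'I_k) (x : RR) : nat :=
  minS (fun r' => (r' == r) || [exists c, (x < C r c) && (x < C r' c)]).
Definition encC (c : 'I_l) (x : RR) : nat := minS (fun r' => x < C r' c).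

Lemma encRC_eq r c x : x < C r c -> encR r x = encC c x.
Proof.
move=> Hx; rewrite /encR /encC /minS; congr find; apply: funext => n; rewrite /pP.
apply: eq_existsb => i; congr andb.
apply/idP/idP.
- case/orP => [/eqP -> //| /existsP [c' /andP [h1 h2]]].
  exact: (@H2 _ _ _ _ _ h1 Hx h2).
- by move=> h; apply/orP; right; apply/existsP; exists c; rewrite Hx h.
Qed.

Lemma encR_le r x : (encR r x < k)%N.
Proof.
apply: (@leq_ltn_trans r); last exact: ltn_ord.
by apply: minS_le; rewrite eqxx.
Qed.

Lemma encRC_neq r c : encR r (C r c) != encC c (C r c).
Proof.
apply/negP => /eqP E.
have Hlt := encR_le r (C r c).
have [i [Ei Pi]] := minS_mem Hlt.
have [j [Ej Pj]] : exists j : 'I_k, val j = encC c (C r c) /\ C r c < C j c.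
  by apply: minS_mem; rewrite /encC -/(encC c (C r c)) -E.
have ij : i = j by apply: val_inj; rewrite Ei Ej.
subst j.
case/orP: Pi => [/eqP Ei'| /existsP [c' /andP [h1 h2]]].
- by move: Pj; rewrite Ei' ltxx.
- by have := @H2 _ _ _ _ _ h2 Pj h1; rewrite ltxx.
Qed.

Lemma encC_le c x : (encC c x <= k)%N.
Proof. exact: minS_lek. Qed.
End Enc.

Section Lift.
Variables (k l : nat) (C : 'M[RR]_(k, l)).
Hypothesis C_nonneg : forall i j, 0 <= C i j.
Hypothesis H2 : forall (x : RR) r r' c c',
  x < C r c' -> x < C r c -> x < C r' c' -> x < C r' c.

Definition Es : seq RR := 0 :: [seq C p.1 p.2 | p <- enum {: 'I_k * 'I_l}].
Lemma Es_ge0 x : x \in Es -> 0 <= x.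
Proof.
rewrite in_cons => /orP [/eqP -> //|/mapP [p _ ->]]; exact: C_nonneg.
Qed.
Lemma C_in_Es r c : C r c \in Es.
Proof. by rewrite in_cons; apply/orP; right; apply/mapP; exists (r, c); rewrite ?mem_enum. Qed.
Lemma Es0 : 0 \in Es.
Proof. by rewrite in_cons eqxx. Qed.

Definition Pser (r : 'I_k) : hs := fun x => if x \in Es then ((1 + encR C r x)%N%:R : CC) else 0.
Definition Qser (c : 'I_l) : hs := fun x => if x \in Es then ((1 + encC C c x)%N%:R : CC) else 0.
Definition Mser : hs := fun x => if x == 0 then - (k.+2)%:R else 0.
Definition zf (i : 'I_(k + 1 + l)) : hs :=
  match split i with
  | inl j => match split j with inl r => Pser r | inr _ => Mser end
  | inr c => fun x => - Qser c x
  end.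

Lemma zf_row r : zf (rowi l r) = Pser r.
Proof.
rewrite /zf /rowi.
have -> : split (lshift l (lshift 1 r)) = inl (lshift 1 r) by exact: (unsplitK (inl _)).
by have -> : split (lshift 1 r) = inl r by exact: (unsplitK (inl _)).
Qed.
Lemma zf_mid : zf (midi k l) = Mser.
Proof.
rewrite /zf /midi.
have -> : split (lshift l (rshift k (ord0 : 'I_1))) = inl (rshift k ord0) by exact: (unsplitK (inl _)).
by have -> : split (rshift k (ord0 : 'I_1)) = inr ord0 by exact: (unsplitK (inr _)).
Qed.
Lemma zf_col c : zf (coli k c) = fun x => - Qser c x.
Proof.
rewrite /zf /coli.
by have -> : split (rshift (k + 1) c) = inr c by exact: (unsplitK (inr _)).
Qed.

Lemma zf_supp i x : zf i x != 0 -> x \in Es.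
Proof.
case: (idx_cases i) => [[r ->]| -> |[c ->]].
- rewrite zf_row /Pser; case: ifP => //; by rewrite eqxx.
- rewrite zf_mid /Mser; have [->|_] := eqVneq x 0; by rewrite ?Es0 ?eqxx.
- rewrite zf_col /Qser; case: ifP => //; by rewrite oppr0 eqxx.
Qed.

Lemma zf_neg i x : x < 0 -> zf i x = 0.
Proof.
move=> Hx; apply/eqP; apply/negP => /negP/zf_supp/Es_ge0; by rewrite leNgt Hx.
Qed.

Lemma zf_hahn i : is_hahn (zf i).
Proof. apply: (hahn_fin (s := Es)); exact: zf_supp. Qed.

Lemma hone_hahn : is_hahn hone.
Proof. apply: (hahn_fin (s := [:: 0])) => x; rewrite /hone; have [->|_] := eqVneq x 0; by rewrite ?inE ?eqxx. Qed.

Lemma hadd_hahn i j : is_hahn (hadd (zf i) (zf j)).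
Proof.
apply: (hahn_fin (s := Es)) => x; rewrite /hadd.
have [/zf_supp //|/negPn/eqP ->] := boolP (zf i x != 0).
rewrite add0r; exact: zf_supp.
Qed.

Lemma hdeg0 f : (forall x, x < 0 -> f x = 0) -> f 0 != 0 -> hdeg_is f 0.
Proof. by move=> H1 H2'; split. Qed.

Lemma Pser0 r : Pser r 0 = (1 + encR C r (0%R:RR))%N%:R.
Proof. by rewrite /Pser Es0. Qed.
Lemma Qser0 c : Qser c 0 = (1 + encC C c (0%R:RR))%N%:R.
Proof. by rewrite /Qser Es0. Qed.
Lemma Mser0 : Mser 0 = - (k.+2)%:R.
Proof. by rewrite /Mser eqxx. Qed.

Lemma deg_rc r c : hdeg_is (hadd (Pser r) (fun x => - Qser c x)) (C r c).
Proof.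
split.
- rewrite /hadd /Pser /Qser C_in_Es subr_eq0 eqr_nat eqSS; exact: encRC_neq.
- move=> x Hx; rewrite /hadd /Pser /Qser; case: ifP => _; last by rewrite oppr0 addr0.
  by rewrite (encRC_eq H2 Hx) subrr.
Qed.

Lemma hadd_neg i j x : x < 0 -> hadd (zf i) (zf j) x = 0.
Proof. by move=> Hx; rewrite /hadd !zf_neg // addr0. Qed.

Lemma deg_all i j : hdeg_is (hadd (zf i) (zf j)) (blockA C i j).
Proof.
case: (idx_cases i) => [[r ->]| -> |[c ->]];
case: (idx_cases j) => [[r' ->]| -> |[c' ->]].
- rewrite A_rr; apply: hdeg0; first exact: hadd_neg.
  by rewrite /hadd !zf_row !Pser0 -natrD pnatr_eq0.
- rewrite A_rm; apply: hdeg0; first exact: hadd_neg.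
  rewrite /hadd zf_row zf_mid Pser0 Mser0 subr_eq0 eqr_nat.
  have := encR_le C r (0%R:RR); rewrite !addSn add0n eqSS; lia.
- rewrite A_rc zf_row zf_col; exact: deg_rc.
- rewrite A_mr; apply: hdeg0; first exact: hadd_neg.
  rewrite /hadd zf_row zf_mid Pser0 Mser0 addrC subr_eq0 eqr_nat.
  have := encR_le C r' (0%R:RR); rewrite !addSn add0n eqSS; lia.
- rewrite A_mm; apply: hdeg0; first exact: hadd_neg.
  by rewrite /hadd zf_mid Mser0 -opprD oppr_eq0 -natrD pnatr_eq0.
- rewrite A_mc; apply: hdeg0; first exact: hadd_neg.
  by rewrite /hadd zf_mid zf_col Mser0 Qser0 -opprD oppr_eq0 -natrD pnatr_eq0.
- rewrite A_cr; have := deg_rc r' c; rewrite /hadd zf_row zf_col.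
  by have -> : (fun x => Pser r' x + - Qser c x) = (fun x => - Qser c x + Pser r' x)
    by apply: funext => x; rewrite addrC.
- rewrite A_cm; apply: hdeg0; first exact: hadd_neg.
  by rewrite /hadd zf_mid zf_col Mser0 Qser0 -opprD oppr_eq0 -natrD pnatr_eq0.
- rewrite A_cc; apply: hdeg0; first exact: hadd_neg.
  by rewrite /hadd !zf_col !Qser0 -opprD oppr_eq0 -natrD pnatr_eq0.
Qed.

Definition Lmx : 'M[hs]_(k + 1 + l) := \matrix_(i, j) hadd (zf i) (zf j).

Lemma Lmx_lift : sym_lift (blockA C) Lmx.
Proof.
split.
- move=> i j; rewrite !mxE; apply: funext => x; by rewrite /hadd addrC.
- move=> i j; split; first by rewrite mxE; exact: hadd_hahn.
  rewrite [Lmx _ _]mxE; exact: deg_all.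
Qed.

Lemma Lmx_factors : hs_factors Lmx 2.
Proof.
exists (\matrix_(i < k + 1 + l, t < 2) if t == ord0 then zf i else hone).
exists (\matrix_(t < 2, j < k + 1 + l) if t == ord0 then hone else zf j).
split; [|split].
- move=> i t; rewrite mxE; case: ifP => _; [exact: zf_hahn | exact: hone_hahn].
- move=> t j; rewrite mxE; case: ifP => _; [exact: hone_hahn | exact: zf_hahn].
- move=> i j; rewrite big_ord_recl big_ord_recl big_ord0 !mxE /=.
  rewrite hmul1r hmul1l; apply: funext => x; by rewrite /hadd addr0.
Qed.
End Lift.
Lemma zero_singular n (A : 'M[RR]_n) (I J : {set 'I_n}) :
  (forall i j, A i j = 0) -> #|I| = 2%N -> #|J| = 2%N -> sym_trop_singular A I J.
Proof.
move=> A0 /eqP/cards2P [a [b [ab ->]]] /eqP/cards2P [c [d [cd ->]]].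
pose rho1 := fun i : 'I_n => if i == a then c else d.
pose rho2 := fun i : 'I_n => if i == a then d else c.
have ba : b != a by rewrite eq_sym.
have Hb1 : is_bij [set a; b] [set c; d] rho1.
  split.
  - move=> x y; rewrite !inE /rho1 => /orP [] /eqP -> /orP [] /eqP -> //;
      rewrite ?eqxx ?(negbTE ba) => E; by move: cd; rewrite E eqxx.
  - by rewrite imsetU1 imset_set1 /rho1 eqxx (negbTE ba).
have Hb2 : is_bij [set a; b] [set c; d] rho2.
  split.
  - move=> x y; rewrite !inE /rho2 => /orP [] /eqP -> /orP [] /eqP -> //;
      rewrite ?eqxx ?(negbTE ba) => E; by move: cd; rewrite E eqxx.
  - by rewrite imsetU1 imset_set1 /rho2 eqxx (negbTE ba) finset.setUC.
have V0 : forall rho, trop_value A [set a; b] rho = 0.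
  by move=> rho; rewrite /trop_value big1 // => i _; rewrite A0.
exists rho1, rho2; split => //.
- move=> E; have := congr1 (fun f => f a c) E; rewrite /sym_monomial.
  have -> : [set i in [set a; b] | (i == a) && (rho2 i == c) || (i == c) && (rho2 i == a)] = finset.set0.
    apply/setP => i; rewrite !inE /rho2.
    have [->|ia] := eqVneq i a; rewrite ?eqxx /=.
    + rewrite (eq_sym d c) (negbTE cd) /=; apply/negP => /andP [/eqP ac /eqP da].
      by move: cd; rewrite -ac da eqxx.
    + apply/negP => /and3P [/eqP ib /eqP ic /eqP ca]; by move: ba; rewrite -ib ic ca eqxx.
  rewrite cards0 => /eqP; rewrite cards_eq0 => /eqP/setP/(_ a).
  by rewrite !inE /rho1 !eqxx.
- by rewrite !V0.
- by move=> sigma _; rewrite !V0.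
Qed.

Lemma hmul0r f g : (forall x, g x = 0) -> forall c, hmul f g c = 0.
Proof.
move=> H c; rewrite /hmul.
have -> : [set p : RR * RR | (p.1 + p.2 = c) /\ f p.1 != 0 /\ g p.2 != 0]%classic
      = set0.
  by apply/seteqP; split => [[p1 p2] /= [_ [_ Hg]] | p //]; move: Hg; rewrite H eqxx.
by rewrite fsbig_set0.
Qed.

Lemma deg_of (f : hs) : is_hahn f -> (exists x, f x != 0) -> exists a, hdeg_is f a.
Proof.
move=> Hf [x Hx]; have [b [Bb Hb]] := Hf (hsupport f) (fun y h => h) (ex_intro _ x Hx).
exists b; split => // y Hy; apply/eqP; apply/negP => /negP Hy'.
by have := Hb _ Hy'; rewrite leNgt Hy.
Qed.

Lemma nz_ex (f : hs) : ~ (forall x, f x = 0) -> exists x, f x != 0.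
Proof.
move=> N; apply: contra_notP N => N x.
by case: (eqVneq (f x) 0) => // H; exfalso; apply: N; exists x.
Qed.

Lemma rank_lb n (A : 'M[RR]_n) : (forall i, A i i = 0) -> (exists i j, A i j != 0) ->
  forall L s, sym_lift A L -> hs_factors L s -> (2 <= s)%N.
Proof.
move=> Adiag [i0 [j0 Hij]] L s [Lsym Ldeg] [U [V [HU [HV HL]]]].
case: s U V HU HV HL => [|[|s]] U V HU HV HL //.
- have [_ [Hnz _]] := Ldeg i0 i0; move: Hnz; by rewrite HL big_ord0 /hzero eqxx.
- exfalso; move: Hij; apply/negP; rewrite negbK; apply/eqP.
  have LE : forall i j, L i j = hmul (U i ord0) (V ord0 j).
    move=> i j; rewrite HL big_ord_recl big_ord0; apply: funext => x; by rewrite /hadd /hzero addr0.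
  have Unz : forall i j : 'I_n, exists a, hdeg_is (U i ord0) a.
    move=> i j; apply: (deg_of (HU _ _)); apply: nz_ex => H.
    have [_ [Hnz _]] := Ldeg i j; move: Hnz; by rewrite LE hmul0l // eqxx.
  have Vnz : forall i j : 'I_n, exists a, hdeg_is (V ord0 j) a.
    move=> i j; apply: (deg_of (HV _ _)); apply: nz_ex => H.
    have [_ [Hnz _]] := Ldeg i j; move: Hnz; by rewrite LE hmul0r // eqxx.
  have Aeq : forall (i j : 'I_n) (a b : RR), hdeg_is (U i ord0) a -> hdeg_is (V ord0 j) b -> A i j = a + b.
    move=> i j a b Ha Hb; have [_ Hd] := Ldeg i j; rewrite LE in Hd.
    exact: hdeg_uniq Hd (hmul_deg Ha Hb).
  have Asym : A i0 j0 = A j0 i0.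
    have [_ H1] := Ldeg i0 j0; have [_ H2] := Ldeg j0 i0.
    by rewrite Lsym in H1; exact: hdeg_uniq H1 H2.
  have [ai Hai] := Unz i0 i0; have [aj Haj] := Unz j0 j0.
  have [bi Hbi] := Vnz i0 i0; have [bj Hbj] := Vnz j0 j0.
  have E1 := Aeq _ _ _ _ Hai Hbj; have E2 := Aeq _ _ _ _ Haj Hbi.
  have E3 := Aeq _ _ _ _ Hai Hbi; have E4 := Aeq _ _ _ _ Haj Hbj.
  rewrite Adiag in E3; rewrite Adiag in E4.
  lra.
Qed.
Lemma H2_of k l (C : 'M[RR]_(k, l)) (C_nonneg : forall i j, 0 <= C i j)
  (Hr : forall (s : nat) (I J : {set 'I_(k + 1 + l)}),
      #|I| = s -> #|J| = s -> ~ sym_trop_singular (blockA C) I J -> (s <= 2)%N) :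
  forall (x : RR) r r' c c', x < C r c' -> x < C r c -> x < C r' c' -> x < C r' c.
Proof.
move=> x r r' c c' h1 h2 h3; rewrite ltNge; apply/negP => Hle.
have a0 := C_nonneg r' c.
have rr' : r != r'.
  by apply/negP => /eqP E; move: h2; rewrite E ltNge Hle.
have cc' : c != c'.
  by apply/negP => /eqP E; move: h3; rewrite -E ltNge Hle.
set R1 := rowi l r; set R2 := rowi l r'; set M := midi k l.
set K1 := coli k c; set K2 := coli k c'.
have R12 : R1 != R2 by apply/negP => /eqP /rowi_inj /eqP; apply/negP.
have R1M : R1 != M by exact: rowi_midi.
have R2M : R2 != M by exact: rowi_midi.
have K12 : K1 != K2 by apply/negP => /eqP /coli_inj /eqP; apply/negP.
have K1M : K1 != M by rewrite eq_sym; exact: midi_coli.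
have K2M : K2 != M by rewrite eq_sym; exact: midi_coli.
set I := R1 |: (R2 |: [set M]).
set J := K1 |: (K2 |: [set M]).
have cI : #|I| = 3%N.
  rewrite !cardsU1 cards1 !inE (negbTE R12) (negbTE R1M) (negbTE R2M); done.
have cJ : #|J| = 3%N.
  rewrite !cardsU1 cards1 !inE (negbTE K12) (negbTE K1M) (negbTE K2M); done.
suff : ~ sym_trop_singular (blockA C) I J by move/(Hr 3%N I J cI cJ).
set A := blockA C.
have Vexp : forall sigma, trop_value A I sigma = A R1 (sigma R1) + (A R2 (sigma R2) + A M (sigma M)).
  move=> sigma; rewrite /trop_value big_setU1 ?big_setU1 ?big_set1 //.
  - by rewrite !inE.
  - by rewrite !inE (negbTE R12) (negbTE R1M).
have key : forall sigma, is_bij I J sigma -> trop_value A I sigma <= C r' c ->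
    [/\ sigma R1 = M, sigma R2 = K1 & sigma M = K2].
  move=> sigma [Hinj Him] Hv; rewrite Vexp in Hv.
  have inI1 : R1 \in I by rewrite !inE eqxx.
  have inI2 : R2 \in I by rewrite !inE eqxx orbT.
  have inIM : M \in I by rewrite !inE eqxx !orbT.
  have inJ : forall y, y \in I -> sigma y = K1 \/ sigma y = K2 \/ sigma y = M.
    move=> y Hy; have : sigma y \in J by rewrite -Him; apply: imset_f.
    by rewrite !inE => /orP [/eqP ->|/orP [/eqP ->|/eqP ->]]; tauto.
  have ne : forall y z, y \in I -> z \in I -> y != z -> sigma y != sigma z.
    by move=> y z Hy Hz; apply: contra => /eqP /(Hinj _ _ Hy Hz) ->.
  have n12 := ne _ _ inI1 inI2 R12; have n1M := ne _ _ inI1 inIM R1M;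
  have n2M := ne _ _ inI2 inIM R2M.
  have ARc := A_rc C; have ARm := A_rm C; have AMc := A_mc C; have AMM := A_mm C.
  case: (inJ _ inI1) => [e1|[e1|e1]]; case: (inJ _ inI2) => [e2|[e2|e2]];
  case: (inJ _ inIM) => [e3|[e3|e3]];
  rewrite ?e1 ?e2 ?e3 in Hv n12 n1M n2M;
  rewrite /A /R1 /R2 /M /K1 /K2 ?A_rc ?A_rm ?A_mc ?A_mm in Hv;
  rewrite ?eqxx in n12 n1M n2M; try done;
  try (exfalso; lra).
have B0 : is_bij I J (fun i => if i == R1 then M else if i == R2 then K1 else K2).
  split.
  - move=> y z; rewrite !inE => /orP [/eqP ->|/orP [/eqP ->|/eqP ->]]
       /orP [/eqP ->|/orP [/eqP ->|/eqP ->]];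
    rewrite ?eqxx ?(negbTE R12) ?(negbTE R1M) ?(negbTE R2M) //
      ?(eq_sym R2 R1) ?(eq_sym M R1) ?(eq_sym M R2) ?(negbTE R12) ?(negbTE R1M) ?(negbTE R2M) //;
    move=> E; by move: K12 K1M K2M; rewrite ?E ?eqxx.
  - rewrite !imsetU1 imset_set1 eqxx (eq_sym R2 R1) (negbTE R12) eqxx
      (eq_sym M R1) (negbTE R1M) (eq_sym M R2) (negbTE R2M).
    apply/setP => y; rewrite !inE.
    by case: (y == M); case: (y == K1); case: (y == K2).
have V0 : trop_value A I (fun i => if i == R1 then M else if i == R2 then K1 else K2) = C r' c.
  rewrite Vexp eqxx (eq_sym R2 R1) (negbTE R12) eqxx (eq_sym M R1) (negbTE R1M)
    (eq_sym M R2) (negbTE R2M).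
  by rewrite /A /R1 /R2 /M /K1 /K2 A_rm A_rc A_mc add0r addr0.
move=> [rho1 [rho2 [B1 B2 Mne Veq Vmin]]].
have Hv1 : trop_value A I rho1 <= C r' c by rewrite -V0; exact: Vmin.
have Hv2 : trop_value A I rho2 <= C r' c by rewrite -Veq.
have [a1 b1 c1] := key _ B1 Hv1; have [a2 b2 c2] := key _ B2 Hv2.
apply: Mne; apply: funext => u; apply: funext => v; rewrite /sym_monomial.
congr #|pred_of_set _|; apply/setP => y; rewrite !inE.
case/orP: (orbN ((y == R1) || (y == R2) || (y == M))) => [/orP [/orP [/eqP ->|/eqP ->]|/eqP ->]|Hy].
- by rewrite a1 a2.
- by rewrite b1 b2.
- by rewrite c1 c2.
- by rewrite !negb_or in Hy; case/andP: Hy => /andP [/negbTE -> /negbTE ->] /negbTE ->.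
Qed.

Unset Implicit Arguments.

Theorem lemma1 (k l : nat) (C : 'M[RR]_(k, l))
  (C_nonneg : forall i j, 0 <= C i j)
  (C_nozerocol : forall j, exists i, C i j != 0) :
  sym_trop_rank_is (blockA C) 2 -> sym_kapranov_rank_is (blockA C) 2.
Proof.
move=> [[I [J [cI cJ Hns]]] Hr].
have H2 := H2_of C_nonneg Hr.
have Anz : exists i j, blockA C i j != 0.
  apply: contra_notP Hns => N; apply: zero_singular cI cJ => i j.
  by case: (eqVneq (blockA C i j) 0) => // H; exfalso; apply: N; exists i, j.
have Adiag : forall i, blockA C i i = 0.
  move=> i; case: (idx_cases i) => [[r ->]| -> |[c ->]];
  by rewrite ?A_rr ?A_mm ?A_cc.
split.
- exists (Lmx C); split; [exact: Lmx_lift | exact: Lmx_factors].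
- move=> L s HL Hf; exact: (@rank_lb _ _ Adiag Anz L s HL Hf).
Qed.
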